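(* Let $(G_n)$ be a sequence of finite $(q_n+1)$-regular graphs $G_n=(V_n,E_n)$, $q_n\in\mathbb{N}^+$, with $|V_n|\to\infty$. If the normalized spectral measures $\mu_n=\mu(G_n)$ satisfy $W_p(\mu_n,\mu_\infty)\to0$ for every $p\in[1,\infty)$, then $q_n=|V_n|^{o(1)}$, i.e. $\log q_n/\log|V_n|\to0$.
   Context: Graphs may have multi-edges and loops; adjacency matrix $A$ with $A_{ab}$ the number of directed edges from $a$ to $b$ (each undirected edge, including loops, giving two directed edges), $(q+1)$-regular meaning every vertex is the origin of $q+1$ directed edges. $\mu(G)=\frac1{|V|}\sum_k\delta_{q^{-1/2}\lambda_k(A)}$ with $\lambda_k(A)$ the eigenvalues of $A$ and $q=q_n$. Semicircle distribution $d\mu_\infty(x)=\frac1{2\pi}\sqrt{4-x^2}\mathbf 1_{|x|\le2}dx$. $W_p(\mu,\nu)=\inf_\gamma(\int|x-y|^pd\gamma)^{1/p}$ over couplings $\gamma$ of $\mu,\nu$. *)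

(* Defs.v *)
From HB Require Import structures.
From mathcomp Require Import all_boot all_order all_algebra.
From mathcomp Require Import all_classical all_reals all_analysis.
Set Implicit Arguments. Unset Strict Implicit. Unset Printing Implicit Defensive.
Import Order.TTheory GRing.Theory Num.Theory.
Import numFieldNormedType.Exports.
Local Open Scope classical_set_scope.
Local Open Scope ring_scope.

(* Adjacency matrix of a finite (q+1)-regular multigraph with loops on N
   vertices: A a b = number of directed edges from a to b; each undirected
   edge (including loops) gives two directed edges, so A is symmetric with
   even diagonal, and every row sums to q+1. *)
Definition regular_adjacency (N q : nat) (A : 'M[nat]_N) : Prop :=
  [/\ A^T = A,
      (forall a : 'I_N, ~~ odd (A a a)) &
      (forall a : 'I_N, (\sum_(b < N) A a b)%N = q.+1)].

Definition eigen_enum (R : realType) (N : nat) (A : 'M[nat]_N)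
    (lam : 'I_N -> R) : Prop :=
  char_poly (map_mx (fun k : nat => k%:R : R) A) = \prod_(i < N) ('X - (lam i)%:P).

Definition semicircle_density (R : realType) (x : R) : R :=
  if `|x| <= 2 then Num.sqrt (4 - x ^+ 2) / (2 * pi) else 0.

Definition coupling_emp_sc (R : realType) (N : nat) (x : 'I_N -> R)
    (gamma : probability (R * R)%type R) : Prop :=
  (forall A : set R, measurable A ->
     gamma (A `*` setT) = ((N%:R)^-1)%:E * (\sum_(i < N) \d_(x i) A))%E /\
  (forall B : set R, measurable B ->
     gamma (setT `*` B) =
       (\int[lebesgue_measure]_(y in B) (semicircle_density y)%:E)%E).

Definition W_emp_sc (R : realType) (p : R) (N : nat) (x : 'I_N -> R) : \bar R :=
  ereal_inf [set ((\int[gamma]_z ((`|z.1 - z.2| `^ p)%:E)) `^ p^-1)%E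
            | gamma in [set g | coupling_emp_sc x g]].

(* Main.v *)
Require Import Defs.
From HB Require Import structures.
From mathcomp Require Import all_boot all_order all_algebra.
From mathcomp Require Import all_classical all_reals all_analysis.
From mathcomp Require Import measurable_realfun.
Import Order.TTheory GRing.Theory Num.Theory.
Import numFieldNormedType.Exports.
Local Open Scope classical_set_scope.
Local Open Scope ring_scope.
From mathcomp Require Import lra.
Lemma perron (R : realType) (N q : nat) (A : 'M[nat]_N) (lam : 'I_N -> R) :
  (0 < N)%N -> regular_adjacency q A -> eigen_enum A lam ->
  exists i, lam i = (q.+1)%:R.
Proof.
move=> N0 [AT _ Arow] Hc.
set B := map_mx (fun k : nat => k%:R : R) A.
have ev : eigenvalue B (q.+1)%:R.
  apply/eigenvalueP; exists (const_mx 1).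
    apply/rowP => j; rewrite !mxE.
    under eq_bigr => i _ do rewrite !mxE mul1r.
    rewrite mulr1 -natr_sum -(Arow j); congr (_%:R).
    apply: eq_bigr => i _; by rewrite -{1}AT mxE.
  apply/negP => /eqP/rowP/(_ (Ordinal N0)); rewrite !mxE => /eqP.
  by rewrite oner_eq0.
move: ev; rewrite eigenvalue_root_char Hc /root horner_prod.
move=> /prodf_eq0 [i _]; rewrite hornerXsubC subr_eq0 => /eqP ->.
by exists i.
Qed.
Local Open Scope ereal_scope.
Lemma meas_f (R : realType) (p : R) :
  measurable_fun [set: (R * R)%type] (fun z : (R * R)%type => (((`|z.1 - z.2| `^ p)%R)%:E : \bar R)).
Proof.
apply/measurable_EFinP.
apply: (measurableT_comp (measurable_powR p)).
apply: (measurableT_comp (@normr_measurable R setT)).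
exact: measurable_funB.
Qed.
Lemma lowerW (R : realType) (N : nat) (x : 'I_N -> R) (i0 : 'I_N) (p : R)
  (gamma : probability (R * R)%type R) :
  (0 <= p)%R -> coupling_emp_sc x gamma -> (2 <= x i0)%R ->
  (((N%:R)^-1 * (x i0 - 2) `^ p)%R)%:E <=
     \int[gamma]_z (((`|z.1 - z.2| `^ p)%R)%:E).
Proof.
move=> p0 [H1 H2] x2.
set I2 := `[(-2)%R, 2%R]%classic : set R.
have mI2 : measurable I2 by exact: measurable_itv.
set S := [set x i0] `*` I2.
have mS : measurable S by apply: measurableX => //; exact: measurable_set1.
have mC : measurable (~` I2) by exact: measurableC.
have g0 : gamma (setT `*` ~` I2) = 0.
  rewrite H2 //; apply: integral0_eq => y Cy.
  rewrite /semicircle_density ifF //; apply/negbTE.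
  apply/negP => Hy; apply: Cy; rewrite /I2 /= in_itv /=.
  by rewrite -ler_norml.
have g1 : ((N%:R)^-1)%:E <= gamma ([set x i0] `*` setT).
  rewrite H1; last exact: measurable_set1.
  rewrite -[X in X <= _]mule1; apply: lee_wpmul2l; first by rewrite lee_fin invr_ge0.
  rewrite (bigD1 i0) //= diracE.
  rewrite mem_set //; apply: leeDl; apply: sume_ge0 => i _.
  exact: measure_ge0.
have gS : ((N%:R)^-1)%:E <= gamma S.
  apply: (le_trans g1).
  have : gamma ([set x i0] `*` setT) <= gamma (S `|` (setT `*` ~` I2)).
    apply: le_measure; rewrite ?inE.
    - by apply: measurableX => //; exact: measurable_set1.
    - by apply: measurableU => //; exact: measurableX.
    move=> [a b] [/= -> _].
    by have [Ib|Ib] := pselect (I2 b); [left|right].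
  move=> /le_trans; apply.
  apply: (le_trans (measureU2 _ _ _)) => //; first exact: measurableX.
  rewrite -[leRHS]adde0; apply: leeD => //; rewrite le_eqVlt; apply/orP; left.
  apply/eqP; exact: g0.
apply: (@le_trans _ _ (\int[gamma]_(z in S) (((`|z.1 - z.2| `^ p)%R)%:E))); last first.
  apply: ge0_subset_integral => //; try exact: meas_f.
  all: try by move=> z _; rewrite lee_fin powR_ge0.
apply: (@le_trans _ _ (\int[gamma]_(z in S) (cst ((x i0 - 2) `^ p)%R%:E z))); last first.
  apply: ge0_le_integral => //.
  - by move=> z _; rewrite lee_fin powR_ge0.
  - by apply: (measurable_funS _ _ (@meas_f R p)).
  move=> [a b] [/= -> Ib]; rewrite lee_fin.
  apply: ge0_ler_powR => //; rewrite ?nnegrE ?subr_ge0 //.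
  move: Ib; rewrite /I2 /= in_itv /= => /andP [_ b2].
  apply: (le_trans _ (ler_norm _)); by rewrite lerD2l lerN2.
rewrite integral_cst // EFinM muleC; apply: lee_wpmul2l => //.
by rewrite lee_fin powR_ge0.
Qed.
Local Close Scope ereal_scope.
Lemma arith (R : realType) (s M p : R) : 1 <= s -> 1 <= M -> 1 <= p ->
  (s^-1 * (s ^+ 2 + 1) - 2) `^ p < M ->
  p * ln (s ^+ 2) < 2 * ln M + 2 * p * ln 4.
Proof.
move=> s1 M1 p1 H.
have s0 : 0 < s by lra.
have lM : 0 <= ln M by exact: ln_ge0.
have l4 : 0 < ln (4 : R) by apply: ln_gt0; lra.
rewrite lnXn // mulr2n.
have [s2|s2] := leP 2 s.
  have ds : s / 4 <= s^-1 * (s ^+ 2 + 1) - 2.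
    have ht : s * (s^-1 * (s ^+ 2 + 1)) = s ^+ 2 + 1.
      by rewrite mulrA mulfV ?gt_eqF // mul1r.
    rewrite -(ler_pM2l s0) mulrBr ht.
    nra.
  have s4 : 0 < s / 4 by lra.
  have h1 : (s / 4) `^ p < M.
    apply: le_lt_trans H; apply: ge0_ler_powR; rewrite ?nnegrE //; lra.
  have h2 : ln ((s / 4) `^ p) < ln M.
    by rewrite ltr_ln ?posrE ?powR_gt0 //; lra.
  move: h2; rewrite ln_powR ln_div ?posrE //; try lra.
have h : ln (s ^+ 2) < ln 4.
  by rewrite ltr_ln ?posrE; nra.
move: h; rewrite lnXn // mulr2n => h.
nra.
Qed.
Lemma fin_arith (R : realType) (lq Ln p e l4 : R) : 0 < e -> 0 <= lq -> 0 < l4 ->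
  p = 4 / e + 1 -> 4 * l4 / e <= Ln -> 0 < Ln -> p * lq < 2 * Ln + 2 * p * l4 ->
  `|0 - lq / Ln| <= e.
Proof.
move=> e0 lq0 l40 pE LnE Ln0 H.
have pe : p * e = 4 + e by rewrite pE mulrDl divfK ?gt_eqF // mul1r.
have le : 4 * l4 <= Ln * e by rewrite -ler_pdivrMr.
have p0 : 0 < p by rewrite pE; apply: addr_gt0 => //; apply: divr_gt0.
have h1 : p * e * Ln >= 4 * Ln by rewrite pe; nra.
have h2 : p * (Ln * e) >= p * (4 * l4) by rewrite ler_pM2l.
have h3 : lq < e * Ln.
  rewrite -(ltr_pM2l p0); nra.
rewrite sub0r normrN ger0_norm; last by apply: divr_ge0 => //; exact: ltW.
rewrite ler_pdivrMr //; exact: ltW.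
Qed.
Lemma two_le (R : realType) (s : R) : 0 < s -> 2 <= s^-1 * (s ^+ 2 + 1).
Proof.
move=> s0.
have ht : s * (s^-1 * (s ^+ 2 + 1)) = s ^+ 2 + 1.
  by rewrite mulrA mulfV ?gt_eqF // mul1r.
rewrite -(ler_pM2l s0) ht; have := sqr_ge0 (s - 1); nra.
Qed.

Theorem lemma4p1 (R : realType) (N q : nat -> nat)
    (A : forall n, 'M[nat]_(N n)) (lam : forall n, 'I_(N n) -> R) :
  (forall n, (0 < N n)%N) ->
  (forall n, (0 < q n)%N) ->
  (forall n, regular_adjacency (q n) (A n)) ->
  (forall n, eigen_enum (A n) (lam n)) ->
  ((fun n => (N n)%:R : R) @ \oo --> +oo) ->
  (forall p : R, 1 <= p ->
     (fun n => W_emp_sc p (fun i => (Num.sqrt ((q n)%:R))^-1 * lam n i))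
       @ \oo --> 0%E) ->
  (fun n => ln ((q n)%:R : R) / ln ((N n)%:R)) @ \oo --> 0.
Proof.
move=> N0 q0 Areg Aeig Ninf hW.
apply/cvgrPdist_le => e e0.
set p : R := 4 / e + 1.
have p1 : 1 <= p by rewrite /p lerDr; apply: divr_ge0 => //; exact: ltW.
have l40 : 0 < ln (4 : R) by apply: ln_gt0; lra.
have ev1 : \forall n \near \oo,
    (W_emp_sc p (fun i => ((Num.sqrt ((q n)%:R))^-1 * lam n i)%R) < 1%E)%E.
  exact: (hW p p1 _ (open_ereal_lt' (@lte01 R))).
have hN : \forall n \near \oo, expR (4 * ln 4 / e) + 2 <= ((N n)%:R : R).
  by move/cvgryPge : Ninf; apply.
near=> n.
have Wn : (W_emp_sc p (fun i => ((Num.sqrt ((q n)%:R))^-1 * lam n i)%R) < 1%E)%E.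
  by near: n; exact: ev1.
have hNn : expR (4 * ln 4 / e) + 2 <= ((N n)%:R : R) by near: n; exact: hN.
move: Wn; rewrite /W_emp_sc => /ereal_inf_lt [y [gamma Hg <-] Hy].
have [i0 Hi0] := @perron R _ _ _ _ (N0 n) (Areg n) (Aeig n).
set s := Num.sqrt ((q n)%:R : R).
have q1 : (1 : R) <= (q n)%:R by rewrite ler1n.
have s0 : 0 < s by rewrite sqrtr_gt0; lra.
have s1 : 1 <= s by rewrite -sqrtr1 ler_wsqrtr.
have ss : s ^+ 2 = (q n)%:R by rewrite sqr_sqrtr //; lra.
have xi0 : s^-1 * lam n i0 = s^-1 * (s ^+ 2 + 1) by rewrite Hi0 ss -natr1.
have p0 : 0 < p by lra.
have hlow := @lowerW R _ _ i0 p gamma (ltW p0) Hg.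
rewrite /= xi0 in hlow.
have {hlow} hlow := hlow (@two_le R s s0).
have hI : (\int[gamma]_z ((`|z.1 - z.2| `^ p)%:E) < 1)%E.
  rewrite ltNge; apply/negP => h1; move: Hy; rewrite ltNge => /negP; apply.
  rewrite -(poweR1r p^-1); apply: gt0_ler_poweR => //.
  - by rewrite invr_ge0 ltW.
  - by rewrite in_itv /= leey andbT.
  - rewrite in_itv /= leey andbT; apply: integral_ge0 => z _.
    by rewrite lee_fin powR_ge0.
have hd := le_lt_trans hlow hI.
rewrite lte_fin mulrC ltr_pdivrMr ?mul1r in hd; last by rewrite ltr0n.
have N1 : (1 : R) <= (N n)%:R by rewrite ler1n.
have har := @arith R _ _ _ s1 N1 p1 hd.
rewrite ss in har.
have N2 : (1 : R) < (N n)%:R.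
  have := expR_ge0 (4 * ln 4 / e); lra.
apply: (@fin_arith R _ _ p e (ln 4)) => //.
- exact: ln_ge0.
- have h : expR (4 * ln 4 / e) < (N n)%:R by lra.
  have h2 : ln (expR (4 * ln 4 / e)) < ln ((N n)%:R : R).
    by rewrite ltr_ln ?posrE ?expR_gt0 //; lra.
  rewrite expRK in h2; exact: ltW.
- exact: ln_gt0.
Unshelve. all: by end_near.
Qed.
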